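(* A family of structures $\mathfrak{K}$ is $\mathbf{co}$-learnable if and only if $\mathfrak{K}$ is a $\Sigma^{\mathrm{inf}}_1$-antichain, i.e., for any two distinct $\mathcal{A},\mathcal{B}\in\mathfrak{K}$ there are $\Sigma^{\mathrm{inf}}_1$ sentences $\varphi,\psi$ with $\mathcal{A}\models\varphi$, $\mathcal{B}\not\models\varphi$, $\mathcal{B}\models\psi$, $\mathcal{A}\not\models\psi$ (equivalently, the $\Sigma^{\mathrm{inf}}_1$-theories of members of $\mathfrak{K}$ are pairwise $\subseteq$-incomparable).
   Context: All structures are countable, have domain $\mathbb{N}$, are in a finite relational signature, and are identified with their atomic diagrams. A family of structures $\mathfrak{K}$ is a countable set of pairwise nonisomorphic such structures. For a structure $\mathcal{S}$ and $s\in\mathbb{N}$, $\mathcal{S}\restriction_s$ denotes the finite substructure with domain $\{0,\dots,s\}$. $\mathrm{LD}(\mathfrak{K})$ is the set of all structures with domain $\mathbb{N}$ isomorphic to some member of $\mathfrak{K}$. The hypothesis space is $\{\ulcorner\mathcal{A}\urcorner:\mathcal{A}\in\mathfrak{K}\}\cup\{?\}$ (pairwise distinct formal symbols); a learner is an arbitrary function $\mathbf{M}$ from $\{\mathcal{S}\restriction_s:\mathcal{S}\in\mathrm{LD}(\mathfrak{K}),s\in\mathbb{N}\}$ to the hypothesis space. $\mathfrak{K}$ is $\mathbf{co}$-learnable if there is a learner $\mathbf{M}$ such that for every $\mathcal{S}\in\mathrm{LD}(\mathfrak{K})$, $\{\mathbf{M}(\mathcal{S}\restriction_s):s\in\mathbb{N}\}\setminus\{?\}=\{\ulcorner\mathcal{B}\urcorner:\mathcal{B}\in\mathfrak{K},\mathcal{B}\neq\mathcal{A}\}$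 where $\mathcal{A}\in\mathfrak{K}$ is isomorphic to $\mathcal{S}$ (i.e., the only conjecture never output is the correct one). The $\Sigma^{\mathrm{inf}}_n$-theory of $\mathcal{A}$ is the set of $\Sigma^{\mathrm{inf}}_n$ sentences true in $\mathcal{A}$. Infinitary logic: $\Sigma^{\mathrm{inf}}_0=\Pi^{\mathrm{inf}}_0$ formulas are finitary quantifier-free formulas; a $\Sigma^{\mathrm{inf}}_\alpha$ formula is a countable disjunction $\bigvee_{i}\exists\bar y_i\,\psi_i$ with each $\psi_i\in\Pi^{\mathrm{inf}}_{\beta_i}$, $\beta_i<\alpha$; a $\Pi^{\mathrm{inf}}_\alpha$ formula is a countable conjunction $\bigwedge_i\forall\bar y_i\,\psi_i$ with each $\psi_i\in\Sigma^{\mathrm{inf}}_{\beta_i}$, $\beta_i<\alpha$ (free variables among a fixed finite tuple). *)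

(* Defs.v *)
From mathcomp Require Import all_boot.
Set Implicit Arguments. Unset Strict Implicit. Unset Printing Implicit Defensive.

(* A finite relational signature: the list of arities of its relation symbols;
   relation symbols are the indices 'I_(size sig). *)
Definition arity (sig : seq nat) (r : 'I_(size sig)) : nat := nth 0 sig r.

(* A structure with domain nat, identified with its atomic diagram:
   for each relation symbol r, which arity-tuples of naturals satisfy r. *)
Definition structure (sig : seq nat) :=
  forall r : 'I_(size sig), (arity r).-tuple nat -> bool.

Definition iso (sig : seq nat) (A B : structure sig) : Prop :=
  exists f : nat -> nat, bijective f /\
    forall (r : 'I_(size sig)) (t : (arity r).-tuple nat),
      A r t = B r (map_tuple f t).

Definition agree_upto (sig : seq nat) (s : nat) (A B : structure sig) : Prop :=
  forall (r : 'I_(size sig)) (t : (arity r).-tuple nat),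
    all (fun x => x <= s) t -> A r t = B r t.

Definition pairwise_noniso (sig : seq nat) (I : Type) (K : I -> structure sig) :=
  forall i j : I, iso (K i) (K j) -> i = j.

Definition LD (sig : seq nat) (I : Type) (K : I -> structure sig)
  (S : structure sig) : Prop := exists i, iso S (K i).

(* A learner: a function on the finite restrictions S|_s, S in LD(K), with values in
   the hypothesis space option I (None = '?', Some i = the name of K i).
   It is encoded as M : nat -> structure sig -> option I which only depends
   on S|_s (for S in LD(K)). *)
Definition learner (sig : seq nat) (I : Type) (K : I -> structure sig)
  (M : nat -> structure sig -> option I) : Prop :=
  forall (s : nat) (S S' : structure sig),
    LD K S -> LD K S' -> agree_upto s S S' -> M s S = M s S'.

Definition co_learnable (sig : seq nat) (I : Type) (K : I -> structure sig) : Prop :=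
  exists M : nat -> structure sig -> option I, learner K M /\
    forall (S : structure sig) (i : I), iso S (K i) ->
      forall j : I, (exists s, M s S = Some j) <-> j <> i.

Inductive qf (sig : seq nat) : Type :=
  | QTrue | QFalse
  | QEq of nat & nat
  | QRel (r : 'I_(size sig)) of (arity r).-tuple nat
  | QNot of qf sig
  | QAnd of qf sig & qf sig
  | QOr of qf sig & qf sig.

Fixpoint qf_eval (sig : seq nat) (A : structure sig) (v : nat -> nat) (f : qf sig)
  : bool :=
  match f with
  | QTrue => true
  | QFalse => false
  | QEq x y => v x == v y
  | QRel r xs => A r (map_tuple v xs)
  | QNot g => ~~ qf_eval A v g
  | QAnd g h => qf_eval A v g && qf_eval A v h
  | QOr g h => qf_eval A v g || qf_eval A v h
  end.

(* A Sigma^inf_1 sentence: a countable disjunction \/_k (exists y_k, psi_k) with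
   psi_k quantifier-free and all (finitely many) variables of psi_k bound by
   the existential block y_k. The countable index set is nat (a finite or empty
   disjunction is obtained by repetition / the disjunct QFalse). *)
Record sigma1_sentence (sig : seq nat) := Sigma1 { s1_disj : nat -> qf sig }.

Definition sat1 (sig : seq nat) (A : structure sig) (phi : sigma1_sentence sig) : Prop :=
  exists (k : nat) (v : nat -> nat), qf_eval A v (s1_disj phi k).

Definition sigma1_antichain (sig : seq nat) (I : Type) (K : I -> structure sig) : Prop :=
  forall i j : I, i <> j ->
    exists phi psi : sigma1_sentence sig,
      [/\ sat1 (K i) phi, ~ sat1 (K j) phi, sat1 (K j) psi & ~ sat1 (K i) psi].

(* Main.v *)
Require Import Defs.
From mathcomp Require Import all_boot.
From Stdlib Require Import ClassicalEpsilon.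

Section Aux.
Variable sig : seq nat.

Lemma map_tuple_comp n (f g : nat -> nat) (t : n.-tuple nat) :
  map_tuple f (map_tuple g t) = map_tuple (f \o g) t.
Proof. by apply: val_inj; rewrite /= map_comp. Qed.

Lemma map_tuple_ext n (f g : nat -> nat) (t : n.-tuple nat) :
  (forall x, x \in t -> f x = g x) -> map_tuple f t = map_tuple g t.
Proof. by move=> H; apply: val_inj; rewrite /=; apply/eq_in_map. Qed.

Lemma qf_eval_ext (A : structure sig) v w (g : qf sig) :
  v =1 w -> qf_eval A v g = qf_eval A w g.
Proof.
move=> E; elim: g => //=.
- by move=> x y; rewrite !E.
- by move=> r xs; by rewrite (@map_tuple_ext _ v w xs).
- by move=> g ->.
- by move=> g -> h ->.
- by move=> g -> h ->.
Qed.

Lemma qf_eval_iso (A B : structure sig) f v (g : qf sig) :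
  injective f ->
  (forall (r : 'I_(size sig)) (t : (arity r).-tuple nat),
      A r t = B r (map_tuple f t)) ->
  qf_eval A v g = qf_eval B (f \o v) g.
Proof.
move=> fi H; elim: g => //=.
- by move=> x y; rewrite (inj_eq fi).
- by move=> r xs; rewrite H map_tuple_comp.
- by move=> g ->.
- by move=> g -> h ->.
- by move=> g -> h ->.
Qed.

Definition fmax (l : seq nat) := foldr maxn 0 l.

Lemma fmax_ge l x : x \in l -> x <= fmax l.
Proof.
elim: l => //= a l IH; rewrite inE => /orP [/eqP ->|/IH]; first exact: leq_maxl.
by move=> h; apply: leq_trans h (leq_maxr _ _).
Qed.

Fixpoint maxvar (g : qf sig) : nat :=
  match g with
  | QTrue | QFalse => 0
  | QEq x y => maxn x y
  | QRel r xs => fmax xs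
  | QNot g => maxvar g
  | QAnd g h | QOr g h => maxn (maxvar g) (maxvar h)
  end.

Lemma bounded_eval (A B : structure sig) v s (g : qf sig) :
  agree_upto s A B -> (forall x, x <= maxvar g -> v x <= s) ->
  qf_eval A v g = qf_eval B v g.
Proof.
move=> AB; elim: g => //=.
- move=> r xs Hb; apply: AB; apply/allP => y /mapP [x xin ->].
  by apply: Hb; apply: fmax_ge.
- by move=> g IH Hb; rewrite IH.
- move=> g IHg h IHh Hb; rewrite IHg ?IHh // => x Hx; apply: Hb;
  rewrite leq_max Hx ?orbT //.
- move=> g IHg h IHh Hb; rewrite IHg ?IHh // => x Hx; apply: Hb;
  rewrite leq_max Hx ?orbT //.
Qed.

Definition bigand (l : seq (qf sig)) := foldr (fun g acc => QAnd g acc) (QTrue sig) l.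

Lemma bigandE (A : structure sig) v l :
  qf_eval A v (bigand l) = all (qf_eval A v) l.
Proof. by elim: l => //= a l ->. Qed.

Definition lit (A : structure sig) s (r : 'I_(size sig)) (t : (arity r).-tuple 'I_s.+1) :=
  let tn := map_tuple (@nat_of_ord s.+1) t in
  if A r tn then @QRel sig r tn else QNot (@QRel sig r tn).

Definition diag (A : structure sig) s : qf sig :=
  QAnd (bigand [seq (if p.1 == p.2 then QTrue sig else QNot (QEq sig p.1 p.2))
               | p <- [seq (x, y) | x <- iota 0 s.+1, y <- iota 0 s.+1]])
       (bigand (flatten [seq [seq @lit A s r t | t : (arity r).-tuple 'I_s.+1]
                        | r <- enum 'I_(size sig)])).

Lemma qf_eval_and (A : structure sig) v g h :
  qf_eval A v (QAnd g h) = qf_eval A v g && qf_eval A v h.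
Proof. by []. Qed.

Lemma all_flat (T : Type) (p : pred T) (l : seq (seq T)) :
  all p (flatten l) = all (all p) l.
Proof. by elim: l => //= a l IH; rewrite all_cat IH. Qed.

Lemma diag_self (A : structure sig) s : qf_eval A id (diag A s).
Proof.
rewrite /diag qf_eval_and !bigandE; apply/andP; split.
  by rewrite all_map; apply/allP => [[x y]] _ /=; case: eqP => //= /eqP.
rewrite all_flat all_map; apply/allP => r _ /=.
rewrite all_map; apply/allP => t _ /=.
rewrite /lit; set tn := map_tuple _ t.
have E : map_tuple id tn = tn by apply: val_inj; rewrite /= map_id.
by case H: (A r tn) => /=; rewrite E H.
Qed.

Lemma diag_sound (A B : structure sig) s v : qf_eval B v (diag A s) ->
  (forall x y, x <= s -> y <= s -> v x = v y -> x = y) /\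
  (forall (r : 'I_(size sig)) (t : (arity r).-tuple nat),
      all (fun x => x <= s) t -> B r (map_tuple v t) = A r t).
Proof.
rewrite /diag qf_eval_and !bigandE => /andP [H1 H2]; split.
  move=> x y xs ys E.
  have Hm : (x, y) \in [seq (x, y) | x <- iota 0 s.+1, y <- iota 0 s.+1].
    by apply/allpairsPdep; exists x, y; rewrite !mem_iota !add0n !ltnS xs ys.
  move: H1; rewrite all_map => /allP /(_ _ Hm) /=.
  by case: eqP => // _ /=; rewrite E eqxx.
move=> r t Ht; move: H2; rewrite all_flat all_map => /allP /(_ r).
rewrite mem_enum => /(_ isT) /=; rewrite all_map => /allP.
set t' := map_tuple (fun x => @inord s x) t.
move=> /(_ t'); rewrite mem_enum => /(_ isT) /=.
have E : map_tuple (@nat_of_ord s.+1) t' = t.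
  apply: val_inj; rewrite /= -map_comp -[RHS]map_id; apply/eq_in_map => x xin /=.
  by rewrite inordK // ltnS; move/allP: Ht; apply.
by rewrite /lit E; case H: (A r t) => /=; [move=> -> | move/negbTE].
Qed.

Lemma swap_bij (a b : nat) :
  bijective (fun y : nat => if y == a then b else if y == b then a else y).
Proof.
apply: inv_bij => y.
case: (eqVneq y a) => [->|ya]; first by rewrite eqxx; case: eqP.
case: (eqVneq y b) => [->|yb]; first by rewrite eqxx.
by rewrite (negbTE ya) (negbTE yb).
Qed.

Lemma extend_bij n (v : nat -> nat) :
  (forall x y, x < n -> y < n -> v x = v y -> x = y) ->
  exists f, bijective f /\ forall x, x < n -> f x = v x.
Proof.
elim: n => [|n IH] Hv.
  by exists id; split => //; exists id.
have [f [fb fE]] : exists f, bijective f /\ forall x, x < n -> f x = v x.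
  by apply: IH => x y xn yn; apply: Hv; apply: ltnW.
set sw := (fun y : nat => if y == f n then v n else if y == v n then f n else y).
exists (sw \o f); split; first exact: bij_comp (swap_bij _ _) fb.
move=> x; rewrite ltnS leq_eqVlt => /orP [/eqP ->|xn] /=; first by rewrite /sw eqxx.
rewrite /sw fE //.
have -> : (v x == f n) = false.
  apply/negbTE/eqP => E; rewrite -fE // in E.
  by move: (bij_inj fb E) => xe; rewrite xe ltnn in xn.
have -> : (v x == v n) = false.
  apply/negbTE/eqP => E; move: (Hv _ _ (ltnW xn) (ltnSn n) E) => xe.
  by rewrite xe ltnn in xn.
by [].
Qed.

End Aux.
Arguments maxvar {sig}.
Arguments diag {sig}.

Definition Cond (sig : seq nat) (I : Type) (K : I -> structure sig) s (S : structure sig) j :=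
  exists (g : qf sig) v, [/\ (forall x, x <= maxvar g -> v x <= s), qf_eval S v g &
     forall w, ~~ qf_eval (K j) w g].
Arguments Cond {sig I}.

Definition Mco (sig : seq nat) (I : countType) (K : I -> structure sig) s (S : structure sig)
  : option I :=
  match @pickle_inv I (logn 2 s) with
  | Some j => if excluded_middle_informative (Cond K s S j) then Some j else None
  | None => None
  end.

Arguments Mco {sig I}.

Lemma iso_eval (sig : seq nat) (S A : structure sig) (g : qf sig) :
  iso S A -> (exists v, qf_eval S v g) <-> (exists v, qf_eval A v g).
Proof.
case=> f [[f' c1 c2] H]; have fi := can_inj c1; split => [[v Hv]|[v Hv]].
  by exists (f \o v); rewrite -(@qf_eval_iso sig S A f v g fi H).
exists (f' \o v); rewrite (@qf_eval_iso sig S A f _ g fi H).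
by rewrite (@qf_eval_ext sig A _ v g) // => x /=; rewrite c2.
Qed.

Lemma dir1 (sig : seq nat) (I : countType) (K : I -> structure sig) :
  sigma1_antichain K -> co_learnable K.
Proof.
move=> AC; exists (Mco K); split.
  move=> s S S' _ _ Hag; rewrite /Mco; case: pickle_inv => // j.
  have E : Cond K s S j <-> Cond K s S' j.
    split=> [[g [v [Hb Hs Hk]]]|[g [v [Hb Hs Hk]]]]; exists g, v; split => //.
      by rewrite -(@bounded_eval sig S S' v s g Hag Hb).
    by rewrite (@bounded_eval sig S S' v s g Hag Hb).
  case: excluded_middle_informative => c1; case: excluded_middle_informative => c2 //.
    by case: c2; apply/E.
  by case: c1; apply/E.
move=> S i Si j; split.
  case=> s; rewrite /Mco; case Hp: pickle_inv => [j'|] //.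
  case: excluded_middle_informative => // [[g [v [_ Hs Hk]]]] [<-] ji.
  rewrite ji in Hk.
  have [w Hw] : exists w, qf_eval (K i) w g by apply/(@iso_eval _ _ _ g Si); exists v.
  by move: (Hk w); rewrite Hw.
move=> ji; have [phi [psi [[k [v0 Hv0]] nphi _ _]]] := AC i j (fun e => ji (esym e)).
set g := s1_disj phi k in Hv0.
have Hk : forall w, ~~ qf_eval (K j) w g.
  by move=> w; apply/negP => Hw; apply: nphi; exists k, w.
have [v Hv] : exists v, qf_eval S v g by apply/(@iso_eval _ _ _ g Si); exists v0.
set s0 := fmax (map v (iota 0 (maxvar g).+1)).
exists ((s0.*2.+1) * 2 ^ (pickle j)).
have Hl : logn 2 ((s0.*2.+1) * 2 ^ (pickle j)) = pickle j.
  rewrite logn_Gauss; first exact: pfactorK.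
  by rewrite coprime2n /= odd_double.
rewrite /Mco Hl pickleK_inv; case: excluded_middle_informative => // nC.
case: nC; exists g, v; split => // x Hx.
apply: (@leq_trans s0).
  by apply: fmax_ge; apply: map_f; rewrite mem_iota add0n ltnS Hx.
apply: (@leq_trans s0.*2.+1); first by rewrite -addnn leqW // leq_addr.
by apply: leq_pmulr; rewrite expn_gt0.
Qed.

Lemma iso_refl (sig : seq nat) (A : structure sig) : iso A A.
Proof.
exists id; split; first by exists id.
by move=> r t; congr (A r); apply: val_inj; rewrite /= map_id.
Qed.

Lemma dir2 (sig : seq nat) (I : countType) (K : I -> structure sig) :
  co_learnable K -> sigma1_antichain K.
Proof.
move=> [M [HL HC]].
have key : forall a b, a <> b -> exists phi, sat1 (K a) phi /\ ~ sat1 (K b) phi.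
  move=> a b ab.
  have [s Hs] : exists s, M s (K a) = Some b.
    apply: (proj2 (HC (K a) a (@iso_refl sig (K a)) b)) => e; apply: ab; by rewrite e.
  exists (@Sigma1 sig (fun _ => diag (K a) s)); split.
    by exists 0, id; apply: diag_self.
  move=> [k [v Hv]]; have [Hinj Hag] := @diag_sound sig (K a) (K b) s v Hv.
  have [f [fb fE]] := @extend_bij s.+1 v (fun x y xs ys => Hinj x y xs ys).
  pose S' : structure sig := fun r t => K b r (map_tuple f t).
  have iS : iso S' (K b) by exists f.
  have ag : agree_upto s S' (K a).
    move=> r t Ht; rewrite /S' -(Hag r t Ht); congr (K b r).
    apply: map_tuple_ext => x xt; apply: fE; rewrite ltnS.
    by move/allP: Ht; apply.
  have E : M s S' = M s (K a).
    by apply: HL => //; [exists b | exists a; apply: (@iso_refl sig)].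
  by apply: (proj1 (HC S' b iS b)) => //; exists s; rewrite E Hs.
move=> i j ij; have [phi [H1 H2]] := key i j ij.
have [psi [H3 H4]] := key j i (fun e => ij (esym e)).
by exists phi, psi; split.
Qed.

Theorem mainTheorem4 (sig : seq nat) (I : countType) (K : I -> structure sig) :
  pairwise_noniso K ->
  (co_learnable K <-> sigma1_antichain K).
Proof.
move=> _; split; [exact: dir2 | exact: dir1].
Qed.
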